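(* Let $V$ be a set of $n$ vertices, $k$ a positive integer, $u,w\in V$ distinct, and $V_{uw}\subseteq V\setminus\{u,w\}$ a set of $k$ vertices partitioned as $V_{uw}=V_u\cup V_w$ with $V_u=\{v_1,\ldots,v_s\}$ and $V_w=\{v_{s+1},\ldots,v_k\}$. Let $t$ be a spanning tree of the complete graph on $V$ with at most $k$ leaves (vertices of degree $1$) such that each vertex of $V_u$ is adjacent in $t$ only to $u$, and each vertex of $V_w$ is adjacent in $t$ only to $w$. Let $t_h$ be the graph obtained from $t$ by deleting the vertices $v_1,\ldots,v_k$ together with their incident edges. Then $t_h$ is a Hamiltonian path on the $n-k$ vertices of $V\setminus V_{uw}$. *)

(* Defs.v *)
From mathcomp Require Import all_boot.
Set Implicit Arguments. Unset Strict Implicit. Unset Printing Implicit Defensive.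

Section Graphs.
Variable T : finType.

Definition simple_graph (e : rel T) : Prop := symmetric e /\ irreflexive e.

Definition nbhd (e : rel T) (x : T) : {set T} := [set y | e x y].
Definition deg (e : rel T) (x : T) : nat := #|nbhd e x|.

Definition leaves (e : rel T) : {set T} := [set x | deg e x == 1].

Definition gconnected (e : rel T) : Prop := forall x y, connect e x y.

Definition has_cycle (e : rel T) : Prop :=
  exists c : seq T, [/\ 3 <= size c, uniq c & cycle e c].

(* a tree (= spanning tree of the complete graph on T) *)
Definition is_tree (e : rel T) : Prop :=
  simple_graph e /\ gconnected e /\ ~ has_cycle e.

(* induced subgraph on S : edges of e with both endpoints in S
   (= delete the vertices outside S with their incident edges) *)
Definition induced (e : rel T) (S : {set T}) : rel T :=
  fun x y => [&& x \in S, y \in S & e x y].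

Definition consec (p : seq T) (x y : T) : bool :=
  ((x, y) \in zip p (behead p)) || ((y, x) \in zip p (behead p)).

Definition is_ham_path (e : rel T) (S : {set T}) : Prop :=
  exists p : seq T,
    [/\ uniq p, S =i p,
        (forall x y, e x y -> x \in S /\ y \in S) &
        (forall x y, x \in S -> y \in S -> e x y = consec p x y)].

End Graphs.

(* Main.v *)
Require Import Defs.
From mathcomp Require Import all_boot.
From mathcomp Require Import zify.

Set Implicit Arguments. Unset Strict Implicit. Unset Printing Implicit Defensive.

Section Aux.
Variable T : finType.
Implicit Types (h e : rel T).

Lemma split_mem (z : T) s : z \in s -> exists p1 p2, s = p1 ++ z :: p2.
Proof. by case/splitPr => p1 p2; exists p1, p2. Qed.

Lemma path_suf h a s p1 z p2 :
  path h a s -> a :: s = p1 ++ z :: p2 -> path h z p2.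
Proof.
case: p1 => [|b p1] /= hp [Ea Es]; first by subst.
by move: hp; rewrite Es cat_path => /andP[_ /= /andP[_]].
Qed.

Lemma last_suf (a : T) s p1 z p2 :
  a :: s = p1 ++ z :: p2 -> last a s = last z p2.
Proof.
case: p1 => [|b p1] /= [Ea Es]; first by subst.
by rewrite Es last_cat.
Qed.

Lemma mk_cycle h x r :
  path h x r -> uniq (x :: r) -> h (last x r) x -> 2 <= size r -> has_cycle h.
Proof.
move=> hp hu hl hs; exists (x :: r); split => //.
by rewrite /= rcons_path hp hl.
Qed.

Lemma zip_in (x y : T) p1 q :
  (x, y) \in zip (p1 ++ x :: y :: q) (behead (p1 ++ x :: y :: q)).
Proof.
elim: p1 => [|a p1 IH] /=; first by rewrite in_cons eqxx.
move: IH; case: p1 => [|b p1] /= IH; by rewrite in_cons IH orbT.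
Qed.

Lemma zip_path h a s x y : path h a s -> (x, y) \in zip (a :: s) s -> h x y.
Proof.
elim: s a => [|b s IH] a //= /andP[hab hp].
rewrite in_cons => /orP[/eqP[-> ->] //|]; exact: IH.
Qed.

Lemma fwd h a s p1 x q1 y q2 :
  path h a s -> uniq (a :: s) -> a :: s = p1 ++ x :: q1 ++ y :: q2 ->
  exists r, [/\ path h x r, last x r = y, uniq (x :: r),
     all (mem (a :: s)) r & (size r <= 1 -> consec (a :: s) x y)].
Proof.
move=> hp hu E; exists (rcons q1 y); split.
- have := path_suf hp E; rewrite cat_path rcons_path => /andP[-> /=].
  by case/andP.
- by rewrite last_rcons.
- move: hu; rewrite E cat_uniq => /and3P[_ _].
  rewrite -cat_cons cat_uniq => /and3P[h1 h2 _].
  rewrite -rcons_cons rcons_uniq h1 andbT.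
  by apply: contra h2 => hy; rewrite /= hy.
- apply/allP => z; rewrite E mem_rcons in_cons => /orP[/eqP->|hz].
    by rewrite !(mem_cat, inE, eqxx, orbT).
  by rewrite !(mem_cat, inE, hz, orbT).
- rewrite size_rcons; case: q1 E => [|? ?] //= E _.
  by rewrite /consec E zip_in.
Qed.

Lemma subpath h (hs : symmetric h) a s x y :
  path h a s -> uniq (a :: s) -> x \in a :: s -> y \in a :: s -> x != y ->
  exists r, [/\ path h x r, last x r = y, uniq (x :: r),
     all (mem (a :: s)) r & (size r <= 1 -> consec (a :: s) x y)].
Proof.
move=> hp hu hx hy hxy.
have [p1 [p2 E]] := split_mem hx.
have : y \in p1 ++ x :: p2 by rewrite -E.
rewrite mem_cat in_cons eq_sym (negbTE hxy) /= => /orP[hy1|hy2].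
- have [q1 [q2 E1]] := split_mem hy1.
  have E2 : a :: s = q1 ++ y :: q2 ++ x :: p2 by rewrite E E1 -catA.
  have [r0 [hp0 hl0 hu0 ha0 hc0]] := fwd hp hu E2.
  have r0n : r0 != [::] by apply: contraNneq hxy => r0e; rewrite -hl0 r0e.
  exists (rev (belast y r0)); split.
  + have := rev_path h y r0; rewrite hl0 => ->.
    by rewrite (eq_path (e' := h)) // => u v; rewrite hs.
  + by case: r0 r0n {hp0 hl0 hu0 ha0 hc0} => [|z r0] //= _; rewrite rev_cons last_rcons.
  + move: hu0; rewrite lastI hl0 rcons_uniq => /andP[h1 h2].
    by rewrite /= mem_rev h1 rev_uniq.
  + apply/allP => z; rewrite mem_rev => /mem_belast; rewrite in_cons => /orP[/eqP->//|hz].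
    exact: (allP ha0).
  + rewrite size_rev size_belast => /hc0; by rewrite /consec orbC.
- have [q1 [q2 E1]] := split_mem hy2.
  have E2 : a :: s = p1 ++ x :: q1 ++ y :: q2 by rewrite E E1.
  exact: fwd hp hu E2.
Qed.

Lemma cross e (Q : pred T) x s :
  ~~ Q x -> Q (last x s) -> path e x s -> exists a b, [/\ ~~ Q a, Q b & e a b].
Proof.
elim: s x => [|y s IH] x /= hx hl; first by rewrite hl in hx.
case/andP => hxy hp; case: (boolP (Q y)) => hy; first by exists x, y.
exact: IH hy hl hp.
Qed.

Lemma key h (hs : symmetric h) (hi : irreflexive h) (nc : ~ has_cycle h)
  (P : pred T) (deg2 : forall x y, ~~ P x -> h x y -> exists2 z, h x z & z != y)
  x : P x -> forall s, path h x s -> s != [::] -> all (predC P) s -> uniq (x :: s) ->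
  exists s2 v, [/\ path h x s2, (s2 != [::]) && uniq (x :: s2), all (predC P) s2, P v && (v != x)
                   & h (last x s2) v].
Proof.
move=> Px.
have step : forall s, path h x s -> s != [::] -> all (predC P) s -> uniq (x :: s) ->
  (exists s2 v, [/\ path h x s2, (s2 != [::]) && uniq (x :: s2), all (predC P) s2, P v && (v != x)
                   & h (last x s2) v]) \/
  exists z, [/\ path h x (rcons s z), all (predC P) (rcons s z) &
                uniq (x :: rcons s z)].
  case/lastP => [|s' r] // hp _ ha hu.
  have hr : ~~ P r by move: ha; rewrite all_rcons => /andP[].
  move: (hp); rewrite rcons_path => /andP[hp' hpr].
  have [z hrz hzp] := deg2 _ _ hr (etrans (hs _ _) hpr).
  case: (boolP (P z)) => Pz.
    case: (eqVneq z x) => [ezx|nzx]; last first.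
      by left; exists (rcons s' r), z; rewrite last_rcons Pz nzx hu; split => //; case: (s').
    exfalso; apply: nc.
    case: s' ha hp hu hp' hpr hzp => [|b s'] ha hp hu hp' hpr hzp.
      by rewrite /= -ezx eqxx in hzp.
    apply: (mk_cycle hp hu); first by rewrite last_rcons -ezx.
    by rewrite size_rcons.
  have hzin : z \in x :: rcons s' r -> z \in x :: s'.
    move=> hz0; rewrite in_cons; move: hz0.
    rewrite in_cons mem_rcons in_cons => /orP[->//|/orP[/eqP ezr|->]]; last by rewrite orbT.
    by rewrite ezr hi in hrz.
  case: (boolP (z \in x :: rcons s' r)) => hz; last first.
    right; exists z; split.
    - by rewrite rcons_path hp last_rcons.
    - by rewrite all_rcons /= Pz.
    - by rewrite -rcons_cons rcons_uniq hz.
  exfalso; apply: nc.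
  have [p1 [p2 E]] := split_mem (hzin hz).
  have p2n : p2 != [::].
    apply: contraNneq hzp => p2e; by rewrite (last_suf E) p2e.
  apply: (@mk_cycle _ z (rcons p2 r)).
  - by rewrite rcons_path (path_suf hp' E) -(last_suf E).
  - move: hu; rewrite -rcons_cons E rcons_cat cat_uniq => /and3P[_ _].
    by rewrite rcons_cons.
  - by rewrite last_rcons.
  - by rewrite size_rcons; case: (p2) p2n.
suff H : forall m s, #|T| - size s <= m -> path h x s -> s != [::] ->
   all (predC P) s -> uniq (x :: s) ->
  exists s2 v, [/\ path h x s2, (s2 != [::]) && uniq (x :: s2), all (predC P) s2, P v && (v != x)
                   & h (last x s2) v].
  by move=> s; apply: (H (#|T| - size s)).
elim=> [|m IH] s hm hp hn ha hu; case: (step s hp hn ha hu) => // [[z [hp2 ha2 hu2]]].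
  exfalso; have H2 : #|x :: rcons s z| <= #|T| := max_card _.
  move: H2; rewrite (card_uniqP hu2) /= size_rcons; move: hm; rewrite leqn0 subn_eq0 => hm h2; have := leq_trans h2 hm; by rewrite ltnNge leqnSn.
apply: (IH (rcons s z)) => //.
  by move: hm; rewrite size_rcons; lia.
by case: (s) hn.
Qed.

Lemma allS_gen e (S' : {set T}) (hs : symmetric e)
  (Nb2 : forall v, v \notin S' -> forall a b, e v a -> e v b -> a = b) x s :
  x \in S' -> last x s \in S' -> path e x s -> uniq (x :: s) -> all (mem S') s.
Proof.
elim: s x => [|y s IH] x xS lS //= /andP[hxy hp] /andP[hnx hu].
case: (boolP (y \in S')) => yS; first exact: IH yS lS hp hu.
exfalso; case: s lS hp hu hnx IH => [|z s] /= lS; first by rewrite lS in yS.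
case/andP => hyz _ _; rewrite !inE => /norP[_ /norP[nxz _]] _.
by rewrite (Nb2 _ yS _ _ (etrans (hs _ _) hxy) hyz) eqxx in nxz.
Qed.

Lemma path_induced e (S' : {set T}) x s :
  x \in S' -> all (mem S') s -> path e x s -> path (induced e S') x s.
Proof.
elim: s x => [|y s IH] x xS //= /andP[yS aS] /andP[hxy hp].
by apply/andP; split; [apply/and3P; split | apply: IH].
Qed.

End Aux.

Theorem lemma2 (T : finType) (n k : nat) (u w : T) (Vu Vw : {set T})
  (t : rel T) :
  #|T| = n ->
  0 < k ->
  u != w ->
  [disjoint Vu & Vw] ->
  u \notin Vu :|: Vw -> w \notin Vu :|: Vw ->
  #|Vu :|: Vw| = k ->
  is_tree t ->
  #|leaves t| <= k ->
  (forall v, v \in Vu -> forall y, t v y -> y = u) ->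
  (forall v, v \in Vw -> forall y, t v y -> y = w) ->
  #|~: (Vu :|: Vw)| = n - k /\
  is_ham_path (induced t (~: (Vu :|: Vw))) (~: (Vu :|: Vw)).
Proof.
move=> Hn Hk Huw Hdis HuS HwS HVk [[hs hi] [hc nc]] Hl Hu Hw.
set A := Vu :|: Vw; set S := ~: A; set h := induced t S.
have uS : u \in S by rewrite inE.
have wS : w \in S by rewrite inE.
have Nb : forall v, v \notin S -> forall y, t v y -> y = u \/ y = w.
  move=> v; rewrite inE negbK inE => /orP[hv|hv] y hy; [left; exact: Hu hv _ hy|right; exact: Hw hv _ hy].
have Nb2 : forall v, v \notin S -> forall a b, t v a -> t v b -> a = b.
  move=> v; rewrite inE negbK inE => /orP[hv|hv] a b ha hb.
    by rewrite (Hu _ hv _ ha) (Hu _ hv _ hb).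
  by rewrite (Hw _ hv _ ha) (Hw _ hv _ hb).
have hasnb : forall x y, x != y -> exists z, t x z.
  move=> x y hxy; case/connectP: (hc x y) => [[|z s]] /= hp hl.
    by rewrite hl eqxx in hxy.
  by exists z; case/andP: hp.
have Aleaf : forall v, v \in A -> v \in leaves t.
  move=> v hv.
  have [a ha] : exists a, [/\ a != v, a \in S & forall y, t v y -> y = a].
    move: hv; rewrite inE => /orP[hv|hv].
      exists u; split => //; last exact: Hu hv.
      by apply: contraNneq HuS => ->; rewrite inE hv.
    exists w; split => //; last exact: Hw hv.
    by apply: contraNneq HwS => ->; rewrite inE hv orbT.
  case: ha => ha _ hy.
  have nva : v != a by rewrite eq_sym.
  have [z hz] := hasnb v a nva.
  have eza := hy _ hz; subst z.
  rewrite inE /deg (_ : nbhd t v = [set a]) ?cards1 //.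
  apply/setP => y; rewrite !inE; apply/idP/eqP => [/hy //|->//].
have hdeg : forall x, x \in S -> x != u -> x != w -> forall y, exists2 z, h x z & z != y.
  move=> x xS xu xw y.
  have xl : x \notin leaves t.
    apply/negP => xl.
    have : x |: A \subset leaves t.
      by apply/subsetP => z; rewrite in_setU1 => /orP[/eqP->//|/Aleaf].
    move/subset_leq_card; rewrite cardsU1 HVk.
    have -> : x \notin A by move: xS; rewrite inE.
    by rewrite add1n ltnNge Hl.
  have [z0 hz0] := hasnb x u xu.
  have : 1 < #|nbhd t x|.
    move: xl; rewrite inE /deg.
    have : 0 < #|nbhd t x| by apply/card_gt0P; exists z0; rewrite inE.
    by case: #|nbhd t x| => [|[|]].
  move=> hcard.
  case: (pickP [pred z | (z \in nbhd t x) && (z != y)]) => [z /andP[hz hzy]|H].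
    exists z => //; rewrite /h /induced xS /=; rewrite inE in hz; rewrite hz andbT.
    apply/negP => /negP zS; have := Nb _ zS _ (etrans (hs _ _) hz).
    by case=> exu; [move: xu|move: xw]; rewrite exu eqxx.
  exfalso; have : nbhd t x \subset [set y].
    apply/subsetP => z hz; rewrite in_set1; have := H z; rewrite /= hz /=.
    by move/negbFE.
  by move/subset_leq_card; rewrite cards1 leqNgt hcard.
have hhs : symmetric h by move=> x y; rewrite /h /induced hs andbCA.
have hhi : irreflexive h by move=> x; rewrite /h /induced hi !andbF.
have hnc : ~ has_cycle h.
  case=> c [c1 c2 c3]; apply: nc; exists c; split => //.
  by apply: sub_cycle c3 => x y /and3P[].
have [s [hp hu hl]] : exists s, [/\ path t u s, uniq (u :: s) & last u s = w].
  case/connectP: (hc u w) => s0 hp0 ->.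
  by case/shortenP: hp0 => s hp hu _; exists s.
have allS : all (mem S) s.
  by apply: (allS_gen hs Nb2 uS) => //; rewrite hl.
have hph : path h u s by apply: path_induced.
have wp : w \in u :: s by rewrite -hl mem_last.
have Sp : S =i u :: s.
  move=> x; apply/idP/idP; last first.
    by rewrite in_cons => /orP[/eqP->//|]; apply: (allP allS).
  move=> xS; case: (boolP (x \in u :: s)) => // hxp; exfalso.
  case/connectP: (hc x u) => s1 hp1 hl1.
  have [a [b [ha hb hab]]] : exists a b, [/\ ~~ (fun y => (y \in u :: s) || (y \notin S)) a,
       (fun y => (y \in u :: s) || (y \notin S)) b & t a b].
    by apply: (cross (Q := [pred y | (y \in u :: s) || (y \notin S)])) hp1; [by rewrite /= negb_or hxp xS | by rewrite /= -hl1 mem_head].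
  move: ha hb; rewrite /= negb_or negbK => /andP[ap aS] /orP[bp|bS]; last first.
    by case: (Nb _ bS _ (etrans (hs _ _) hab)) => ea; move: ap; rewrite ea ?mem_head ?wp.
  have bS : b \in S by move: bp; rewrite in_cons => /orP[/eqP->//|]; apply: (allP allS).
  have hba : h b a by rewrite /h /induced bS aS hs.
  have deg2 : forall x y, ~~ (x \in u :: s) -> h x y -> exists2 z, h x z & z != y.
    move=> x0 y0 hx0 /and3P[x0S _ _]; apply: hdeg => //.
      by apply: contraNneq hx0 => ->; rewrite mem_head.
    by apply: contraNneq hx0 => ->.
  have e1 : path h b [:: a] by rewrite /= hba.
  have e2 : all (predC (mem (u :: s))) [:: a] by rewrite /= ap.
  have e3 : uniq [:: b; a] by rewrite /= inE andbT; apply: contraNneq ap => <-.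
  have [s2 [v [hp2 /andP[hn2 hu2] ha2 /andP[vp vb] hl2]]] :=
    @key _ h hhs hhi hnc (mem (u :: s)) deg2 b bp [:: a] e1 erefl e2 e3.
  have [r [hpr hlr hur har _]] := subpath hhs hph hu vp bp vb.
  apply: hnc; apply: (@mk_cycle _ _ v (r ++ s2)).
  - by rewrite cat_path hpr hlr hp2.
  - rewrite -cat_cons cat_uniq hur /=.
    apply/andP; split.
      apply/hasPn => z hz; move: (allP ha2 z hz) => /= hzp.
      rewrite inE negb_or; apply/andP; split.
        by apply: contraNneq hzp => ->.
      by apply: contra hzp => hzr; exact: (allP har).
    by move: hu2 => /andP[].
  - by rewrite last_cat hlr.
  - have rn : r != [::] by apply: contraNneq vb => re; rewrite -hlr re.
    by rewrite size_cat; case: (r) rn => // ? ? _; case: (s2) hn2 => // ? ? _ /=; rewrite addSn addnS.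
split.
  by rewrite -Hn -HVk -(cardsC A) addKn.
exists (u :: s); split => //.
  by move=> x y /and3P[].
move=> x y xS yS; apply/idP/idP => [hxy|].
  have xy : x != y by apply: contraTneq hxy => ->; rewrite hhi.
  have xp : x \in u :: s by rewrite -Sp.
  have yp : y \in u :: s by rewrite -Sp.
  have [r [hpr hlr hur _ hcr]] := subpath hhs hph hu xp yp xy.
  case: (leqP (size r) 1) => [/hcr //|sr]; exfalso; apply: hnc.
  by apply: (mk_cycle hpr hur) => //; rewrite hlr hhs.
rewrite /consec => /orP[] hz.
  exact: zip_path hph hz.
by rewrite hhs; exact: zip_path hph hz.
Qed.
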